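(* Let $k\ge 1$ and $r\ge 2$ be integers and let $d_1\ge d_2\ge \cdots\ge d_k$ be positive integers. Then for all sufficiently large $n$, $$ex_r\Big(n,\bigcup_{i=1}^k S^+_{d_i}\Big)=\max_{1\le i\le k}\left\{\binom{n}{r}-\binom{n-i+1}{r}+ex_r\big(n-i+1,S^+_{d_i}\big)\right\}.$$
   Context: For a family (or single) $r$-uniform hypergraph $\mathcal F$, $ex_r(n,\mathcal F)$ denotes the maximum number of hyperedges in an $n$-vertex $r$-uniform hypergraph containing no member of $\mathcal F$ as a (not necessarily induced) subhypergraph. $S_\ell$ denotes the star $K_{1,\ell}$ with $\ell$ edges. For a graph $F$ and $r\ge 2$, the expansion $F^+$ is the $r$-uniform hypergraph obtained from $F$ by adding $r-2$ new vertices to each edge, all added vertices being distinct (so for $r=2$, $F^+=F$). $\bigcup_{i=1}^k S^+_{d_i}$ denotes the vertex-disjoint union of the hypergraphs $S^+_{d_1},\dots,S^+_{d_k}$. *)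

(* Defs.v *)
From mathcomp Require Import all_boot.
Set Warnings "-notation-overridden".
Set Implicit Arguments. Unset Strict Implicit. Unset Printing Implicit Defensive.

(* A hypergraph is represented by its edge set; its vertex set is the cover
   of its edges (no isolated vertices). Host hypergraphs live on 'I_n. *)

Definition uniform (V : finType) (r : nat) (H : {set {set V}}) : bool :=
  [forall e in H, #|e| == r].

Definition contains (V W : finType) (F : {set {set V}}) (H : {set {set W}}) : bool :=
  [exists f : {ffun V -> W},
     [forall x in cover F, forall y in cover F, (f x == f y) ==> (x == y)] &&
     [forall e in F, (f @: e) \in H]].

Definition ex (r n : nat) (V : finType) (F : {set {set V}}) : nat :=
  \max_(H : {set {set 'I_n}} | uniform r H && ~~ contains F H) #|H|.

(* Expansion S_d^+ of the star K_{1,d}: center None, petal j consists of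
   the leaf (j,0) and the r-2 new vertices (j,1),...,(j,r-2). *)
Definition star_vert (d r : nat) : finType := option ('I_d * 'I_r.-1).

Definition star_edge (d r : nat) (j : 'I_d) : {set star_vert d r} :=
  None |: [set Some (j, t) | t : 'I_r.-1].

Definition star_exp (r d : nat) : {set {set star_vert d r}} :=
  [set @star_edge d r j | j : 'I_d].

(* Vertex-disjoint union of S^+_{d_0}, ..., S^+_{d_{k-1}}. *)
Definition ustar_vert (r k : nat) (d : 'I_k -> nat) : finType :=
  {i : 'I_k & star_vert (d i) r}.

Definition ustar_exp (r k : nat) (d : 'I_k -> nat) : {set {set ustar_vert r d}} :=
  \bigcup_(i < k)
     [set [set (Tagged (fun i0 => star_vert (d i0) r) v : ustar_vert r d) | v in e]
     | e : {set star_vert (d i) r} in star_exp r (d i)].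

(* Main.v *)
Require Import Defs.
From mathcomp Require Import all_boot zify.
Set Implicit Arguments. Unset Strict Implicit. Unset Printing Implicit Defensive.

Definition starP n r (H : {set {set 'I_n}}) (c : 'I_n) (P : nat -> {set 'I_n}) (dd : nat) : Prop :=
  (forall j, j < dd -> [/\ #|P j| = r.-1, c \notin P j & c |: P j \in H]) /\
  (forall j j', j < dd -> j' < dd -> j != j' -> [disjoint P j & P j']).

Definition sverts n (c : 'I_n) (P : nat -> {set 'I_n}) dd := c |: \bigcup_(j < dd) P j.

Lemma nth_enum_in n (A : {set 'I_n}) x0 t : t < #|A| -> nth x0 (enum A) t \in A.
Proof. by move=> h; rewrite -mem_enum mem_nth // -cardE. Qed.

Lemma imset_nth_enum n m (A : {set 'I_n}) x0 : #|A| = m ->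
  [set nth x0 (enum A) (val t) | t : 'I_m] = A.
Proof.
move=> hA; apply/setP=> x; apply/idP/idP.
  by case/imsetP=> t _ ->; apply: nth_enum_in; rewrite hA ltn_ord.
move=> xA; have hi : index x (enum A) < m by rewrite -hA cardE index_mem mem_enum.
by apply/imsetP; exists (Ordinal hi) => //=; rewrite nth_index // mem_enum.
Qed.

Section Combine.
Variables (n r k : nat) (d : 'I_k -> nat) (H : {set {set 'I_n}}).
Variables (c : 'I_k -> 'I_n) (P : 'I_k -> nat -> {set 'I_n}).
Hypothesis hS : forall i, starP r H (c i) (P i) (d i).
Hypothesis hD : forall i i', i != i' ->
  [disjoint sverts (c i) (P i) (d i) & sverts (c i') (P i') (d i')].

Definition fcomb (x : ustar_vert r d) : 'I_n :=
  match x with existT i v =>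
    match v with None => c i | Some (j, t) => nth (c i) (enum (P i j)) t end end.

Lemma fcomb_in i v : fcomb (existT _ i v) \in sverts (c i) (P i) (d i).
Proof.
rewrite /sverts; case: v => [[j t]|] /=; last by rewrite setU11.
rewrite setU1r //; apply/bigcupP; exists (Ordinal (ltn_ord j)) => //=.
by apply: nth_enum_in; case: (hS i) => h _; case: (h j (ltn_ord j)) => -> _ _.
Qed.

Lemma fcomb_inj : injective fcomb.
Proof.
case=> i v [] i' v'.
case: (eqVneq i i') => [eii|neq] eqf; first subst i'; last first.
  have := hD neq; rewrite disjoints_subset => /subsetP /(_ _ (fcomb_in v)).
  by rewrite eqf inE fcomb_in.
have [hS1 hS2] := hS i.
congr existT.
case: v v' eqf => [[j t]|] [[j' t']|] //=.
- have [hj _ _] := hS1 j (ltn_ord j); have [hj' _ _] := hS1 j' (ltn_ord j').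
  case: (eqVneq (val j) (val j')) => [ejj'|nj] eqf.
    have ej : j = j' by apply: val_inj.
    subst j'; congr (Some (_, _)); apply: val_inj => /=.
    move/eqP: eqf; rewrite ejj' nth_uniq ?enum_uniq // -?cardE ?hj // => /eqP //.
  have := hS2 _ _ (ltn_ord j) (ltn_ord j') nj; rewrite disjoints_subset => /subsetP.
  move/(_ (nth (c i) (enum (P i j)) t)); rewrite nth_enum_in ?hj // => /(_ isT).
  by rewrite eqf inE nth_enum_in ?hj'.
- move=> eqf; have [hj hc _] := hS1 j (ltn_ord j); move: hc.
  by rewrite -eqf nth_enum_in ?hj.
- move=> eqf; have [hj hc _] := hS1 j' (ltn_ord j'); move: hc.
  by rewrite eqf nth_enum_in ?hj.
Qed.

Lemma combine : contains (ustar_exp r d) H.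
Proof.
apply/existsP; exists (finfun fcomb); apply/andP; split.
  apply/forallP=> x; apply/implyP=> _; apply/forallP=> y; apply/implyP=> _.
  by apply/implyP; rewrite !ffunE => /eqP /fcomb_inj ->.
apply/forallP=> e; apply/implyP=> /bigcupP [i _ /imsetP [e0 /imsetP [j _ ->] ->]].
have -> : [set finfun fcomb x | x in [set (Tagged (fun i0 => star_vert (d i0) r) v : ustar_vert r d) | v in star_edge r j]]
   = c i |: P i j.
  rewrite -imset_comp /star_edge imsetU1 /=; rewrite ffunE /=; congr (_ |: _).
  rewrite -imset_comp; rewrite -[RHS](@imset_nth_enum _ r.-1 _ (c i)).
    by apply: eq_imset => t /=; rewrite ffunE.
  by case: (hS i) => h _; case: (h j (ltn_ord j)).
by case: (hS i) => h _; case: (h j (ltn_ord j)).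
Qed.
End Combine.

Lemma disjP (T : finType) (A B : {set T}) :
  reflect (forall x, x \in A -> x \in B -> False) [disjoint A & B].
Proof.
apply: (iffP idP) => [h x xA xB | h]; first by rewrite (disjointFr h xA) in xB.
apply/pred0P => x /=; apply/negbTE/negP => /andP [xA xB]; exact: h x xA xB.
Qed.

Definition deg n (H : {set {set 'I_n}}) (v : 'I_n) := #|[set e in H | v \in e]|.

Lemma card_bigcup_le (T I : finType) (A : {pred I}) (F : I -> {set T}) :
  #|\bigcup_(i in A) F i| <= \sum_(i in A) #|F i|.
Proof.
elim/big_rec2: _ => [|i x y _ hxy]; first by rewrite cards0.
by apply: leq_trans (leq_card_setU _ _) _; rewrite leq_add2l.
Qed.

Lemma pair_count n r (H : {set {set 'I_n}}) (u v : 'I_n) : uniform r H -> u != v ->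
  #|[set e in H | (v \in e) && (u \in e)]| <= 'C(n, r.-2).
Proof.
move=> /forallP hU nuv.
pose g (e : {set 'I_n}) := e :\: [set u; v].
have hinj : {in [set e in H | (v \in e) && (u \in e)] &, injective g}.
  move=> e1 e2; rewrite !inE => /andP [_ /andP [v1 u1]] /andP [_ /andP [v2 u2]] eg.
  have s1 : [set u; v] \subset e1 by rewrite subUset !sub1set u1 v1.
  have s2 : [set u; v] \subset e2 by rewrite subUset !sub1set u2 v2.
  have E1 : e1 = [set u; v] :|: g e1 by rewrite -{1}(setID e1 [set u; v]) (setIidPr s1).
  have E2 : e2 = [set u; v] :|: g e2 by rewrite -{1}(setID e2 [set u; v]) (setIidPr s2).
  by rewrite E1 E2 eg.
rewrite -(card_in_imset hinj); have -> : 'C(n, r.-2) = 'C(#|'I_n|, r.-2) by rewrite card_ord.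
rewrite -card_draws subset_leq_card //.
apply/subsetP=> A /imsetP [e]; rewrite inE => /andP [eH /andP [ve ue]] ->.
rewrite inE /g cardsD; move: (hU e); rewrite eH /= => /eqP ->.
have -> : e :&: [set u; v] = [set u; v].
  by apply/setIidPr; rewrite subUset !sub1set ue ve.
by rewrite cards2 nuv /= subn2.
Qed.

Lemma meet_count n r (H : {set {set 'I_n}}) v (U : {set 'I_n}) : uniform r H -> v \notin U ->
  #|[set e in H | (v \in e) && ~~ [disjoint e & U]]| <= #|U| * 'C(n, r.-2).
Proof.
move=> hU vU.
have sub : [set e in H | (v \in e) && ~~ [disjoint e & U]] \subset
           \bigcup_(u in U) [set e in H | (v \in e) && (u \in e)].
  apply/subsetP=> e; rewrite inE => /andP [eH /andP [ve /pred0Pn [u /andP [ue uU]]]].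
  by apply/bigcupP; exists u => //; rewrite inE eH ve /=; move: ue; rewrite !inE.
apply: leq_trans (subset_leq_card sub) _; apply: leq_trans (card_bigcup_le _ _) _.
rewrite -sum_nat_const; apply: leq_sum => u uU; apply: pair_count => //.
by apply: contraNneq vU => <-.
Qed.

Lemma petal_greedy n r (H : {set {set 'I_n}}) v (U : {set 'I_n}) dd :
  uniform r H -> v \notin U ->
  (#|U| + r.-1 * dd) * 'C(n, r.-2) < deg H v ->
  exists P, starP r H v P dd /\ forall j, j < dd -> [disjoint P j & U].
Proof.
move=> hU vU; elim: dd => [|dd IH] hdeg.
  by exists (fun _ => set0); split; [split|].
have [|P [[hP1 hP2] hPU]] := IH.
  by apply: leq_ltn_trans hdeg; rewrite leq_mul2r leq_add2l leq_mul2l ltnW ?orbT.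
pose U' := U :|: \bigcup_(j < dd) P j.
have cU' : #|U'| <= #|U| + r.-1 * dd.
  apply: leq_trans (leq_card_setU _ _) _; rewrite leq_add2l.
  apply: leq_trans (card_bigcup_le _ _) _.
  rewrite (eq_bigr (fun _ => r.-1)); last by move=> j _; case: (hP1 j (ltn_ord j)).
  by rewrite sum_nat_const card_ord mulnC.
have vU' : v \notin U'.
  rewrite !inE negb_or vU /=; apply/bigcupP => [[j _]].
  by case: (hP1 j (ltn_ord j)) => _ /negP.
have : 0 < #|[set e in H | (v \in e) && [disjoint e & U']]|.
  have hsplit : deg H v = #|[set e in H | (v \in e) && [disjoint e & U']]| +
                         #|[set e in H | (v \in e) && ~~ [disjoint e & U']]|.
    rewrite /deg -(cardsID [set e : {set 'I_n} | [disjoint e & U']] [set e in H | v \in e]).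
    congr (_ + _); apply: eq_card => e; rewrite !inE; by case: (e \in H); case: (v \in e); case: [disjoint e & U'].
  have := meet_count hU vU'; move: hdeg; rewrite hsplit.
  case: #|[set e in H | (v \in e) && [disjoint e & U']]| => // hd hm.
  have : (#|U| + r.-1 * dd.+1) * 'C(n, r.-2) < #|U'| * 'C(n, r.-2).
    by rewrite add0n in hd; exact: leq_trans hd hm.
  rewrite ltn_mul2r => /andP [_]; rewrite ltnNge => /negP [].
  by apply: leq_trans cU' _; rewrite leq_add2l leq_mul2l leqnSn orbT.
case/card_gt0P => e; rewrite !inE => /andP [eH /andP [ve deU]].
exists (fun j => if j == dd then e :\ v else P j); split; [split|].
- move=> j; rewrite ltnS leq_eqVlt; case: (eqVneq j dd) => [-> _|njd /= jd].
    split; rewrite ?setD11 ?setD1K //.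
    by have := (forallP hU) e; rewrite eH /= (cardsD1 v e) ve => /eqP <-.
  exact: hP1.
- move=> j j'; rewrite !ltnS (leq_eqVlt j) (leq_eqVlt j').
  have dP : forall j, j < dd -> [disjoint e :\ v & P j].
    move=> j0 hj0; apply/disjP => x; rewrite inE => /andP [_ xe] xP.
    move/disjP: deU => /(_ x xe); apply; rewrite inE; apply/orP; right.
    by apply/bigcupP; exists (Ordinal hj0).
  case: (eqVneq j dd) => [->|njd]; case: (eqVneq j' dd) => [->|nj'd] //.
  + by move=> _ h _; apply: dP.
  + by move=> h _ _; rewrite disjoint_sym; apply: dP.
  + by move=> /= h1 h2; apply: hP2.
- move=> j; rewrite ltnS leq_eqVlt; case: (eqVneq j dd) => [_ _|nj /= hj]; last exact: hPU.
  + apply/disjP => x; rewrite inE => /andP [_ xe] xU.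
    by move/disjP: deU => /(_ x xe); apply; rewrite inE xU.
Qed.

Lemma sverts_card n r (H : {set {set 'I_n}}) c P dd :
  starP r H c P dd -> #|sverts c P dd| <= 1 + r.-1 * dd.
Proof.
case=> h1 _; apply: leq_trans (leq_card_setU _ _) _; rewrite cards1 leq_add2l.
apply: leq_trans (card_bigcup_le _ _) _.
rewrite (eq_bigr (fun _ => r.-1)); last by move=> j _; case: (h1 j (ltn_ord j)).
by rewrite sum_nat_const card_ord mulnC.
Qed.

Lemma sverts_c n (c : 'I_n) (P : nat -> {set 'I_n}) dd : c \in sverts c P dd.
Proof. by rewrite /sverts setU11. Qed.

Lemma sverts_P n (c : 'I_n) (P : nat -> {set 'I_n}) dd j x : j < dd -> x \in P j -> x \in sverts c P dd.
Proof. by move=> hj xP; rewrite /sverts setU1r //; apply/bigcupP; exists (Ordinal hj). Qed.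

Lemma svertsP n (c : 'I_n) (P : nat -> {set 'I_n}) dd x : x \in sverts c P dd -> x = c \/ exists2 j, j < dd & x \in P j.
Proof.
rewrite /sverts => /setU1P [->|/bigcupP [j _ xP]]; [by left|right; by exists j].
Qed.

Section Extend.
Variables (n r k : nat) (d : 'I_k -> nat) (H : {set {set 'I_n}}).
Hypothesis hU : uniform r H.
Let s := \sum_(i < k) (1 + r.-1 * d i).
Let D := s * 'C(n, r.-2).

Lemma extend_gen m : forall (I : {set 'I_k}) (c : 'I_k -> 'I_n) (P : 'I_k -> nat -> {set 'I_n}),
  #|~: I| = m ->
  (forall i, i \in I -> starP r H (c i) (P i) (d i)) ->
  (forall i i', i \in I -> i' \in I -> i != i' ->
     [disjoint sverts (c i) (P i) (d i) & sverts (c i') (P i') (d i')]) ->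
  (forall i, i \notin I -> D < deg H (c i)) ->
  (forall i i', i \notin I -> i' \notin I -> i != i' -> c i != c i') ->
  (forall i i', i \notin I -> i' \in I -> c i \notin sverts (c i') (P i') (d i')) ->
  contains (ustar_exp r d) H.
Proof.
elim: m => [|m IH] I c P hm h1 h2 h3 h4 h5.
  have allI : forall i, i \in I.
    move=> i; move/eqP: hm; rewrite cards_eq0 => /eqP e.
    by have := in_setC i I; rewrite e inE => /esym /negbFE.
  by apply: (combine (c := c) (P := P)) => [i|i i' nii]; [apply: h1|apply: h2].
have : 0 < #|~: I| by rewrite hm.
case/card_gt0P => i0; rewrite inE => i0I.
pose U := (\bigcup_(i' in I) sverts (c i') (P i') (d i')) :|: c @: (~: I :\ i0).
have cU : #|U| + r.-1 * d i0 <= s.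
  apply: (@leq_trans ((\sum_(i < k | i \in I) (1 + r.-1 * d i)) + #|~: I :\ i0| + r.-1 * d i0)).
    rewrite leq_add2r; apply: leq_trans (leq_card_setU _ _) _; apply: leq_add.
      apply: leq_trans (card_bigcup_le _ _) _; apply: leq_sum => i iI.
      exact: sverts_card (h1 i iI).
    exact: leq_imset_card.
  have hcard : #|~: I :\ i0| <= \sum_(i < k | ~~ (i \in I) && (i != i0)) (1 + r.-1 * d i).
    rewrite -sum1_card (eq_bigl (fun i => ~~ (i \in I) && (i != i0))); last first.
      by move=> i; rewrite !inE andbC.
    by apply: leq_sum => i _; apply: leq_addr.
  rewrite /s [X in _ <= X](bigID (fun i => i \in I)) /= [X in _ <= _ + X](bigD1 i0) //=. rewrite -addnA; apply: leq_add; first exact: leqnn.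
  apply: leq_trans (leq_add hcard (leqnn _)) _.
  have aux : forall x y : nat, x + y <= 1 + y + x by move=> x y; lia.
  exact: aux.
have ci0U : c i0 \notin U.
  rewrite inE negb_or; apply/andP; split.
    by apply/bigcupP => [[i' i'I]]; apply/negP; exact: h5 i0 i' i0I i'I.
  apply/imsetP => [[i]]; rewrite !inE => /andP [ni0 niI] e.
  by move: (h4 i0 i i0I niI); rewrite eq_sym ni0 e eqxx => /(_ isT).
have hdeg : (#|U| + r.-1 * d i0) * 'C(n, r.-2) < deg H (c i0).
  by apply: leq_ltn_trans (h3 i0 i0I); rewrite /D leq_mul2r cU orbT.
have [Pn [hPn hPnU]] := petal_greedy hU ci0U hdeg.
have niI : forall i, i \in I -> i != i0 by move=> i iI; apply: contraNneq i0I => <-.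
have key : forall i', i' \in I -> [disjoint sverts (c i0) Pn (d i0) & sverts (c i') (P i') (d i')].
  move=> i' i'I; apply/disjP => x /svertsP [->|[j hj xP]] xi'.
    by move: (h5 i0 i' i0I i'I); rewrite xi'.
  move/disjP: (hPnU j hj) => /(_ x xP); apply; rewrite inE; apply/orP; left.
  by apply/bigcupP; exists i'.
apply: (IH (i0 |: I) c (fun i => if i == i0 then Pn else P i)).
- have := cardsD1 i0 (~: I); rewrite hm inE i0I add1n => [[->]].
  by apply: eq_card => x; rewrite !inE negb_or andbC.
- move=> i; rewrite !inE => /orP [/eqP ->|iI]; first by rewrite eqxx.
  by rewrite (negbTE (niI i iI)); apply: h1.
- move=> i i'; rewrite !inE => /orP [/eqP ->|iI] /orP [/eqP ->|i'I]; rewrite ?eqxx //.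
  + by rewrite (negbTE (niI i' i'I)) => _; apply: key.
  + by rewrite (negbTE (niI i iI)) => _; rewrite disjoint_sym; apply: key.
  + by rewrite (negbTE (niI i iI)) (negbTE (niI i' i'I)); apply: h2.
- by move=> i; rewrite !inE negb_or => /andP [_]; apply: h3.
- by move=> i i'; rewrite !inE !negb_or => /andP [_ ?] /andP [_ ?]; apply: h4.
- move=> i i' hi hi'; rewrite !in_setU1 negb_or in hi hi'; case/andP: hi => nii0 iI; case/orP: hi' => [/eqP ->|i'I].
    rewrite eqxx; apply/negP => /svertsP [ci|[j hj cP]].
      by move: (h4 i i0 iI i0I nii0); rewrite ci eqxx.
    move/disjP: (hPnU j hj) => /(_ _ cP); apply; rewrite inE; apply/orP; right.
    by apply/imsetP; exists i => //; rewrite !inE nii0 iI.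
  by rewrite (negbTE (niI i' i'I)); apply: h5.
Qed.
End Extend.

Lemma containsP (V W : finType) (F : {set {set V}}) (G : {set {set W}}) :
  reflect (exists f : {ffun V -> W}, (forall x y, x \in cover F -> y \in cover F -> f x = f y -> x = y)
            /\ forall e, e \in F -> f @: e \in G) (contains F G).
Proof.
apply: (iffP existsP) => [[f /andP [/forallP h1 /forallP h2]]|[f [h1 h2]]].
  exists f; split.
    move=> x y xF yF e; move: (h1 x); rewrite xF /= => /forallP /(_ y); rewrite yF /=.
    by rewrite e eqxx => /eqP.
  by move=> e eF; move: (h2 e); rewrite eF.
exists f; apply/andP; split; apply/forallP => x; apply/implyP => xF.
  by apply/forallP => y; apply/implyP => yF; apply/implyP => /eqP e; rewrite (h1 x y).
exact: h2.
Qed.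

Section Transport.
Variables (V W1 W2 : finType) (F : {set {set V}}) (G : {set {set W1}}) (h : W1 -> W2) (A : {set W1}).
Hypothesis hinj : {in A &, injective h}.
Hypothesis hsub : forall e, e \in G -> e \subset A.

Lemma transport (w0 : W1) : contains F [set h @: e | e : {set W1} in G] -> contains F G.
Proof.
case/containsP => f [finj fE].
pose psi y := odflt w0 [pick a in A | h a == y].
have psiK : forall a, a \in A -> psi (h a) = a.
  move=> a aA; rewrite /psi; case: pickP => [a' /andP [a'A /eqP e]|/(_ a)] /=.
    exact: hinj.
  by rewrite aA eqxx.
have fx : forall x, x \in cover F -> exists2 a, a \in A & f x = h a.
  move=> x /bigcupP [e eF xe]; have /imsetP [e' e'G ee'] := fE e eF.
  have : f x \in h @: e' by rewrite -ee'; apply: imset_f.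
  case/imsetP => a ae' ->; exists a => //; exact: (subsetP (hsub e'G)).
apply/containsP; exists [ffun x => psi (f x)]; split.
  move=> x y xF yF; rewrite !ffunE.
  have [a aA ea] := fx x xF; have [b bA eb] := fx y yF.
  rewrite ea eb !psiK // => eab; apply: finj => //; by rewrite ea eb eab.
move=> e eF; have /imsetP [e' e'G ee'] := fE e eF.
have -> : [set [ffun x => psi (f x)] x | x in e] = psi @: (f @: e).
  by rewrite -imset_comp; apply: eq_imset => x; rewrite ffunE.
rewrite ee' -imset_comp (eq_in_imset (g := id)) ?imset_id //.
by move=> a ae /=; apply: psiK; exact: (subsetP (hsub e'G)).
Qed.

Lemma image_inj : {in G &, injective (fun e : {set W1} => h @: e)}.
Proof.
move=> e1 e2 e1G e2G ee.
have sub : forall a b, a \in G -> b \in G -> h @: a = h @: b -> a \subset b.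
  move=> a b aG bG eab; apply/subsetP => x xa.
  have : h x \in h @: b by rewrite -eab imset_f.
  case/imsetP => y yb hxy.
  by rewrite (hinj (subsetP (hsub aG) _ xa) (subsetP (hsub bG) _ yb) hxy).
by apply/eqP; rewrite eqEsubset !sub.
Qed.

Lemma image_card : #|[set h @: e | e : {set W1} in G]| = #|G|.
Proof. exact: card_in_imset image_inj. Qed.

Lemma image_uniform r : uniform r G -> uniform r [set h @: e | e : {set W1} in G].
Proof.
move=> /forallP hU; apply/forallP => e'; apply/implyP => /imsetP [e eG ->].
rewrite card_in_imset; first by move: (hU e); rewrite eG.
by move=> x y xe ye; apply: hinj; apply: (subsetP (hsub eG)).
Qed.
End Transport.

Lemma ex_upper n m r (V : finType) (F : {set {set V}}) (G : {set {set 'I_n}}) (A : {set 'I_n}) :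
  0 < r -> uniform r G -> ~~ contains F G -> (forall e, e \in G -> e \subset A) -> #|A| <= m ->
  #|G| <= ex r m F.
Proof.
move=> r0 hU nc hsub hA.
have [->|/set0Pn [e eG]] := eqVneq G set0; first by rewrite cards0.
have : 0 < #|e| by move: ((forallP hU) e); rewrite eG /= => /eqP ->.
case/card_gt0P => w0 w0e.
have w0A : w0 \in A := subsetP (hsub e eG) _ w0e.
case: m hA => [|m] hA.
  have : 0 < #|A| by apply/card_gt0P; exists w0.
  by rewrite ltnNge hA.
pose phi (a : 'I_n) : 'I_m.+1 := inord (index a (enum A)).
have phinj : {in A &, injective phi}.
  move=> a b aA bA eab; have := congr1 val eab; rewrite /phi /= !inordK; last 2 first.
  - by apply: leq_trans hA; rewrite cardE index_mem mem_enum.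
  - by apply: leq_trans hA; rewrite cardE index_mem mem_enum.
  move=> e'; have Ea : nth a (enum A) (index a (enum A)) = a by apply: nth_index; rewrite mem_enum.
  have Eb : nth a (enum A) (index b (enum A)) = b by apply: nth_index; rewrite mem_enum.
  by rewrite -Ea -Eb e'.
rewrite -(image_card phinj hsub).
apply: (@leq_bigmax_cond _ (fun H0 : {set {set 'I_m.+1}} => uniform r H0 && ~~ contains F H0)
  (fun H0 => #|H0|)).
rewrite (image_uniform phinj hsub hU) /=.
by apply: contra nc; apply: (transport phinj hsub w0).
Qed.

Lemma cover_star r dd (x : star_vert dd r) : 0 < dd -> x \in cover (star_exp r dd).
Proof.
move=> hdd; apply/bigcupP; case: x => [[j t]|].
  exists (star_edge r j); first by apply: imset_f.
  by rewrite /star_edge setU1r //; apply: imset_f.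
exists (star_edge r (Ordinal hdd)); first by apply: imset_f.
by rewrite /star_edge setU11.
Qed.

Lemma extract n r dd (G : {set {set 'I_n}}) : 0 < dd -> contains (star_exp r dd) G ->
  exists c P, starP r G c P dd.
Proof.
move=> hdd /containsP [f [finj0 fE]].
have finj : injective f by move=> x y; apply: finj0; apply: cover_star.
pose j0 : 'I_dd := Ordinal hdd.
pose P (j : nat) := [set f (Some (insubd j0 j, t)) | t : 'I_r.-1].
exists (f None), P; split.
  move=> j hj; split.
  - rewrite /P card_imset ?card_ord //.
    by move=> t t' /finj [->].
  - by apply/imsetP => [[t _ /finj]].
  - have := fE (star_edge r (insubd j0 j)) (imset_f _ _).
    rewrite /star_edge imsetU1 -imset_comp; by apply.
move=> j j' hj hj' njj'; apply/disjP => x /imsetP [t _ ->] /imsetP [t' _ /finj [e _]].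
have vj : val (insubd j0 j) = j by rewrite val_insubd hj.
have vj' : val (insubd j0 j') = j' by rewrite val_insubd hj'.
by move: njj'; rewrite -vj -vj' e eqxx.
Qed.

Lemma starP_mono n r (G H : {set {set 'I_n}}) c P dd :
  G \subset H -> starP r G c P dd -> starP r H c P dd.
Proof.
move=> sGH [h1 h2]; split => // j hj; have [? ? ?] := h1 j hj; split => //.
exact: (subsetP sGH).
Qed.

Lemma starP_le n r (G : {set {set 'I_n}}) c P dd dd' :
  dd' <= dd -> starP r G c P dd -> starP r G c P dd'.
Proof.
move=> le [h1 h2]; split => [j hj|j j' hj hj']; first by apply: h1; apply: leq_trans le.
by apply: h2; apply: leq_trans le.
Qed.

Lemma sverts_le n (c : 'I_n) (P : nat -> {set 'I_n}) dd dd' :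
  dd' <= dd -> sverts c P dd' \subset sverts c P dd.
Proof.
move=> le; apply/subsetP => x /svertsP [->|[j hj xP]]; first exact: sverts_c.
by apply: (sverts_P _ (leq_trans hj le)).
Qed.

Lemma sverts_inedge n r (G : {set {set 'I_n}}) c P dd x :
  starP r G c P dd -> 0 < dd -> x \in sverts c P dd -> exists2 e, e \in G & x \in e.
Proof.
case=> h1 _ hdd /svertsP [->|[j hj xP]].
  by have [_ _ ?] := h1 0 hdd; exists (c |: P 0) => //; rewrite setU11.
by have [_ _ ?] := h1 j hj; exists (c |: P j) => //; rewrite setU1r.
Qed.

Lemma card_lt n m : m <= n -> #|[set x : 'I_n | x < m]| = m.
Proof.
move=> le; have -> : [set x : 'I_n | x < m] = [set widen_ord le x | x : 'I_m].
  apply/setP => x; rewrite inE; apply/idP/imsetP => [xm|[y _ ->]] //=.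
  by exists (Ordinal xm) => //; apply: val_inj.
rewrite card_imset ?card_ord //.
by move=> x y /(congr1 val) /= /val_inj.
Qed.

Lemma card_meet n r (L : {set 'I_n}) :
  #|[set e : {set 'I_n} | (#|e| == r) && ~~ [disjoint e & L]]| = 'C(n, r) - 'C(n - #|L|, r).
Proof.
have E1 : #|[set e : {set 'I_n} | #|e| == r]| = 'C(n, r) by rewrite card_draws card_ord.
have E2 : #|[set e : {set 'I_n} | (#|e| == r) && [disjoint e & L]]| = 'C(n - #|L|, r).
  have cL : #|~: L| = n - #|L|.
    have := cardsC L; rewrite card_ord; lia.
  rewrite -cL -cards_draws; apply: eq_card => e; rewrite !inE disjoints_subset andbC //.
have := cardsID [set e : {set 'I_n} | [disjoint e & L]] [set e : {set 'I_n} | #|e| == r].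
rewrite E1.
have -> : [set e : {set 'I_n} | #|e| == r] :&: [set e : {set 'I_n} | [disjoint e & L]] =
  [set e : {set 'I_n} | (#|e| == r) && [disjoint e & L]].
  by apply/setP => e; rewrite !inE.
have -> : [set e : {set 'I_n} | #|e| == r] :\: [set e : {set 'I_n} | [disjoint e & L]] =
  [set e : {set 'I_n} | (#|e| == r) && ~~ [disjoint e & L]].
  by apply/setP => e; rewrite !inE andbC.
by rewrite E2 => <-; rewrite addKn.
Qed.

Lemma ex_attained r m (V : finType) (F : {set {set V}}) : F != set0 ->
  exists2 G : {set {set 'I_m}}, uniform r G && ~~ contains F G & ex r m F = #|G|.
Proof.
move=> /set0Pn [e0 e0F].
have P0 : uniform r (set0 : {set {set 'I_m}}) && ~~ contains F (set0 : {set {set 'I_m}}).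
  apply/andP; split; first by apply/forallP => e; rewrite inE.
  apply/negP => /containsP [f [_ fE]]; by move: (fE e0 e0F); rewrite inE.
rewrite /ex (bigmax_eq_arg (P := fun G : {set {set 'I_m}} => uniform r G && ~~ contains F G) _ P0).
case: arg_maxnP => //= G PG _; by exists G.
Qed.

Definition shift n i (x : 'I_(n - i)) : 'I_n.
Proof. refine (@Ordinal n (x + i) _); abstract (have := ltn_ord x; lia). Defined.

Lemma cover_ustar r k (d : 'I_k -> nat) (x : ustar_vert r d) : (forall i, 0 < d i) ->
  x \in cover (ustar_exp r d).
Proof.
move=> hd; case: x => j v; have /bigcupP [e0 e0S ve0] := cover_star v (hd j).
apply/bigcupP; exists [set (Tagged (fun i0 => star_vert (d i0) r) v : ustar_vert r d) | v in e0].
  by apply/bigcupP; exists j => //; apply: imset_f.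
exact: imset_f.
Qed.

Lemma tagged_edge r k (d : 'I_k -> nat) j (e0 : {set star_vert (d j) r}) :
  e0 \in star_exp r (d j) ->
  [set (Tagged (fun i0 => star_vert (d i0) r) v : ustar_vert r d) | v in e0] \in ustar_exp r d.
Proof. by move=> h; apply/bigcupP; exists j => //; apply: imset_f. Qed.

Lemma lower n r k (d : 'I_k -> nat) (i : 'I_k) : 0 < r -> (forall j, 0 < d j) ->
  (forall a b : 'I_k, a <= b -> d b <= d a) -> i < n ->
  'C(n, r) - 'C(n - i, r) + ex r (n - i) (star_exp r (d i)) <= ex r n (ustar_exp r d).
Proof.
move=> r0 hd hmono hin.
have Sne : star_exp r (d i) != set0.
  by apply/set0Pn; exists (star_edge r (Ordinal (hd i))); apply: imset_f.
have [G /andP [GU GF] ->] := ex_attained r (n - i) Sne.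
have h0 : 0 < n - i by lia.
pose w0 : 'I_(n - i) := Ordinal h0.
pose L := [set x : 'I_n | x < i].
have cL : #|L| = i by apply: card_lt; apply: ltnW.
pose h := @shift n i.
have hinj : injective h.
  by move=> x y /(congr1 val) /= /eqP; rewrite eqn_add2r => /eqP /val_inj.
have hsub : forall e, e \in G -> e \subset setT by move=> e _; apply: subsetT.
have hinjA : {in setT &, injective h} by move=> x y _ _; apply: hinj.
pose G' := [set h @: e | e : {set 'I_(n - i)} in G].
have G'L : forall e, e \in G' -> [disjoint e & L].
  move=> e /imsetP [e0 _ ->]; apply/disjP => x /imsetP [y _ ->]; rewrite inE /=.
  by rewrite ltnNge leq_addl.
pose H1 := [set e : {set 'I_n} | (#|e| == r) && ~~ [disjoint e & L]].
pose Hi := H1 :|: G'.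
have cHi : #|Hi| = 'C(n, r) - 'C(n - i, r) + #|G|.
  rewrite /Hi cardsU (@disjoint_setI0 _ H1 G') ?cards0 ?subn0.
    by rewrite card_meet cL (image_card hinjA hsub).
  apply/disjP => e; rewrite inE => /andP [_ /negP nd] /G'L //.
have HiU : uniform r Hi.
  apply/forallP => e; apply/implyP; rewrite inE => /orP [|eG'].
    by rewrite inE => /andP [].
  by move: (forallP (image_uniform hinjA hsub GU) e); rewrite eG'.
rewrite -cHi.
apply: (@leq_bigmax_cond _ (fun H0 => uniform r H0 && ~~ contains (ustar_exp r d) H0) (fun H0 => #|H0|)).
rewrite HiU /=; apply/negP => /containsP [f [finj0 fE]].
have finj : injective f by move=> x y; apply: finj0; apply: cover_ustar.
pose T := fun j : 'I_k => star_vert (d j) r.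
have claim : forall j : 'I_k, j <= i -> exists v, f (existT T j v) \in L.
  move=> j hj; case: (boolP [exists v, f (existT T j v) \in L]) => [/existsP //|/existsPn nv].
  exfalso; have le : d i <= d j := hmono j i hj.
  pose emb (v : star_vert (d i) r) : star_vert (d j) r :=
    match v with None => None | Some (a, t) => Some (widen_ord le a, t) end.
  have embinj : injective emb.
    case=> [[a t]|] [[a' t']|] //= [e1 ->].
    by rewrite (val_inj e1).
  move/negP: GF; apply; apply: (transport hinjA hsub w0); apply/containsP.
  exists [ffun v => f (existT T j (emb v))]; split.
    move=> x y _ _; rewrite !ffunE => /finj exy; apply: embinj; exact: eq_from_Tagged exy.
  move=> e /imsetP [a _ ->].
  have E0in : star_edge r (widen_ord le a) \in star_exp r (d j) by apply: imset_f.
  have inHi := fE _ (tagged_edge E0in).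
  have E : [set [ffun v => f (existT T j (emb v))] x | x in star_edge r a] =
           f @: [set (Tagged (fun i0 => star_vert (d i0) r) v : ustar_vert r d) | v in star_edge r (widen_ord le a)].
    rewrite /star_edge !imsetU1 ffunE /=; congr (_ |: _); rewrite -!imset_comp.
    by apply: eq_imset => t /=; rewrite ffunE.
  rewrite E; move: inHi; rewrite inE => /orP [|//]; rewrite inE => /andP [_ /negP []].
  apply/disjP => x /imsetP [y /imsetP [v _ ->] ->]; exact/negP/nv.
pose phi (j : 'I_k) := f (existT T j (odflt None [pick v | f (existT T j v) \in L])).
have phiL : forall j : 'I_k, j <= i -> phi j \in L.
  move=> j hj; rewrite /phi; case: pickP => [v //|nv].
  by have [v hv] := claim j hj; rewrite nv in hv.
pose J := [set j : 'I_k | j < i.+1].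
have cJ : #|J| = i.+1 by apply: card_lt; exact: ltn_ord i.
have : #|phi @: J| <= #|L|.
  apply: subset_leq_card; apply/subsetP => x /imsetP [j]; rewrite inE ltnS => hj ->.
  exact: phiL.
rewrite card_in_imset ?cJ ?cL ?ltnn //.
by move=> j j' _ _ /finj /(congr1 tag).
Qed.

Definition sumS r k (d : 'I_k -> nat) := \sum_(i < k) (1 + r.-1 * d i).

Lemma term_le_s r k (d : 'I_k -> nat) i : 1 + r.-1 * d i <= sumS r d.
Proof. by rewrite /sumS (bigD1 i) //= leq_addr. Qed.

Section Greedy.
Variables (n r k : nat) (d : 'I_k -> nat) (H : {set {set 'I_n}}).
Hypothesis hU : uniform r H.
Hypothesis r0 : 0 < r.
Hypothesis hd : forall i, 0 < d i.
Variable B : {set 'I_n}.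
Variable D : nat.
Hypothesis hB : forall u, u \notin B -> deg H u <= D.

Lemma count_rm (S : {set {set 'I_n}}) (V : {set 'I_n}) :
  S \subset H -> [disjoint V & B] ->
  #|S| <= #|[set e in S | [disjoint e & V]]| + #|V| * D.
Proof.
move=> SH VB.
have sub : S \subset [set e in S | [disjoint e & V]] :|: \bigcup_(u in V) [set e in H | u \in e].
  apply/subsetP => e eS; rewrite inE; case: (boolP [disjoint e & V]) => [dj|ndj].
    by rewrite inE eS dj.
  apply/orP; right; case/pred0Pn: ndj => u /andP [ue uV].
  by apply/bigcupP; exists u => //; rewrite inE (subsetP SH _ eS).
apply: leq_trans (subset_leq_card sub) _; apply: leq_trans (leq_card_setU _ _) _.
rewrite leq_add2l; apply: leq_trans (card_bigcup_le _ _) _.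
rewrite -sum_nat_const; apply: leq_sum => u uV; apply: hB.
by rewrite (disjointFr VB uV).
Qed.

Definition goodI (I : {set 'I_k}) (c : 'I_k -> 'I_n) (P : 'I_k -> nat -> {set 'I_n}) :=
  [/\ forall i, i \in I -> starP r H (c i) (P i) (d i),
      forall i, i \in I -> [disjoint sverts (c i) (P i) (d i) & B] &
      forall i i', i \in I -> i' \in I -> i != i' ->
        [disjoint sverts (c i) (P i) (d i) & sverts (c i') (P i') (d i')]].

Variables (bb dd m : nat).
Hypothesis hdd : 0 < dd.
Hypothesis Hfull : forall c P, goodI [set i : 'I_k | bb <= i] c P -> False.
Hypothesis hddmax : forall i : 'I_k, bb < i -> d i <= dd.

Lemma greedy2 J : forall (I : {set 'I_k}) (c : 'I_k -> 'I_n) (P : 'I_k -> nat -> {set 'I_n}) (X : {set 'I_n}),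
  I \subset [set i : 'I_k | bb <= i] -> #|[set i : 'I_k | bb <= i] :\: I| = J ->
  (forall i : 'I_k, bb <= i -> i \notin I -> bb < i) ->
  goodI I c P -> B \subset X -> (forall i, i \in I -> sverts (c i) (P i) (d i) \subset X) ->
  #|~: X| <= m ->
  #|[set e in H | [disjoint e & X]]| <= ex r m (star_exp r dd) + J * (sumS r d * D).
Proof.
elim: J => [|J IH] I c P X sI cJ hnot good BX VX cX.
  have eI : I = [set i : 'I_k | bb <= i].
    apply/eqP; rewrite eqEsubset sI /=; move/eqP: cJ; rewrite cards_eq0 => /eqP e.
    by rewrite -setD_eq0 e.
  by exfalso; apply: (Hfull (c := c) (P := P)); rewrite -eI.
set G := [set e in H | [disjoint e & X]].
have GH : G \subset H by apply/subsetP => e; rewrite inE => /andP [].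
have GU : uniform r G.
  by apply/forallP => e; apply/implyP => eG; move: ((forallP hU) e); rewrite (subsetP GH _ eG).
case: (boolP (contains (star_exp r dd) G)) => [cG|ncG]; last first.
  apply: leq_trans (leq_addr _ _).
  apply: (ex_upper (A := ~: X) r0 GU ncG) => // e; rewrite inE => /andP [_].
  by rewrite disjoints_subset.
have [c' [P' sP']] := extract hdd cG.
have : 0 < #|[set i : 'I_k | bb <= i] :\: I| by rewrite cJ.
case/card_gt0P => i0; rewrite !inE => /andP [i0I bi0].
have di0 : d i0 <= dd by apply: hddmax; apply: hnot.
pose V' := sverts c' P' (d i0).
have V'X : [disjoint V' & X].
  apply/disjP => x xV xX.
  have [e eG xe] := sverts_inedge sP' hdd (subsetP (sverts_le c' P' di0) _ xV).
  by move: eG; rewrite inE => /andP [_ /disjP /(_ x xe xX)].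
have V'B : [disjoint V' & B].
  by apply/disjP => x xV xB; move/disjP: V'X => /(_ x xV (subsetP BX _ xB)).
have sPH : starP r H c' P' (d i0) by apply: starP_le di0 (starP_mono GH sP').
pose c2 := fun i => if i == i0 then c' else c i.
pose P2 := fun i => if i == i0 then P' else P i.
have niI : forall i, i \in I -> i != i0 by move=> i iI; apply: contraNneq i0I => <-.
case: good => g1 g2 g3.
have := IH (i0 |: I) c2 P2 (X :|: V').
set G' := [set e in H | [disjoint e & X :|: V']].
have cnt : #|G| <= #|G'| + sumS r d * D.
  apply: leq_trans (count_rm GH V'B) _; rewrite leq_add //.
    rewrite subset_leq_card //; apply/subsetP => e; rewrite !inE => /andP [/andP [eH dX] dV].
    rewrite eH /=; apply/disjP => x xe; rewrite inE => /orP [xX|xV].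
      by move/disjP: dX => /(_ x xe xX).
    by move/disjP: dV => /(_ x xe xV).
  by rewrite leq_mul2r (leq_trans (sverts_card sPH)) ?term_le_s ?orbT.
move=> IH'; apply: leq_trans cnt _.
rewrite mulSn addnCA [X in X <= _]addnC leq_add2l; apply: IH'.
- by rewrite subUset sub1set inE bi0 sI.
- move: cJ; rewrite (cardsD1 i0) !inE i0I bi0 /= add1n => [[<-]].
  by apply: eq_card => x; rewrite !inE negb_or; case: (x == i0); case: (x \in I); case: (bb <= x).
- by move=> i hi; rewrite inE negb_or => /andP [_]; apply: hnot.
- split.
  + move=> i; rewrite in_setU1 => /orP [/eqP ->|iI]; first by rewrite /c2 /P2 eqxx.
    by rewrite /c2 /P2 (negbTE (niI i iI)); apply: g1.
  + move=> i; rewrite in_setU1 => /orP [/eqP ->|iI]; first by rewrite /c2 /P2 eqxx.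
    by rewrite /c2 /P2 (negbTE (niI i iI)); apply: g2.
  + have key : forall i, i \in I -> [disjoint V' & sverts (c i) (P i) (d i)].
      move=> i iI; apply/disjP => x xV xs.
      by move/disjP: V'X => /(_ x xV (subsetP (VX i iI) _ xs)).
    move=> i i'; rewrite !in_setU1 => /orP [/eqP ->|iI] /orP [/eqP ->|i'I]; rewrite ?eqxx //.
    * by rewrite /c2 /P2 eqxx (negbTE (niI i' i'I)) => _; apply: key.
    * by rewrite /c2 /P2 eqxx (negbTE (niI i iI)) => _; rewrite disjoint_sym; apply: key.
    * by rewrite /c2 /P2 (negbTE (niI i iI)) (negbTE (niI i' i'I)); apply: g3.
- by apply: subset_trans BX (subsetUl _ _).
- move=> i; rewrite in_setU1 => /orP [/eqP ->|iI]; first by rewrite /c2 /P2 eqxx subsetUr.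
  by rewrite /c2 /P2 (negbTE (niI i iI)); apply: subset_trans (VX i iI) (subsetUl _ _).
- by apply: leq_trans cX; apply: subset_leq_card; rewrite setCS subsetUl.
Qed.
End Greedy.

Lemma fin_arith X Cb Cb1 Z E h : Cb = Cb1 + Z -> Cb <= X -> h <= E + Z ->
  X - Cb + h <= X - Cb1 + E.
Proof. lia. Qed.

Section Upper.
Variables (n r k : nat) (d : 'I_k -> nat) (H : {set {set 'I_n}}).
Hypothesis r0 : 0 < r.
Hypothesis hd : forall i, 0 < d i.
Hypothesis hmono : forall a b : 'I_k, a <= b -> d b <= d a.
Hypothesis hU : uniform r H.
Hypothesis hF : ~~ contains (ustar_exp r d) H.
Hypothesis hkn : k < n.
Let s := sumS r d.
Let D := s * 'C(n, r.-2).
Hypothesis harith : k.+1 * (s * D) <= 'C(n - k, r.-1).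

Lemma upper : #|H| <= \max_(i < k) ('C(n, r) - 'C(n - i, r) + ex r (n - i) (star_exp r (d i))).
Proof.
pose B := [set v | D < deg H v].
have hB : forall u, u \notin B -> deg H u <= D by move=> u; rewrite inE -leqNgt.
have hn : 0 < n by lia.
pose v0 : 'I_n := Ordinal hn.
pose cen (i : 'I_k) := nth v0 (enum B) i.
have cenB : forall i : 'I_k, i < #|B| -> cen i \in B by move=> i hi; apply: nth_enum_in.
have cen_inj : forall i i' : 'I_k, i < #|B| -> i' < #|B| -> i != i' -> cen i != cen i'.
  move=> i i' hi hi' nii; rewrite /cen nth_uniq ?enum_uniq -?cardE //.
have hb : #|B| < k.
  rewrite ltnNge; apply/negP => kB; move/negP: hF; apply.
  apply: (@extend_gen n r k d H hU k set0 cen (fun _ _ => set0)).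
  - by rewrite setC0 cardsT card_ord.
  - by move=> i; rewrite inE.
  - by move=> i i'; rewrite inE.
  - move=> i _; have := cenB i (leq_trans (ltn_ord i) kB); by rewrite inE.
  - move=> i i' _ _; apply: cen_inj; exact: leq_trans (ltn_ord _) kB.
  - by move=> i i' _; rewrite inE.
pose b := #|B|.
pose bi : 'I_k := Ordinal hb.
have Hfull : forall c P, goodI r d H B [set i : 'I_k | b <= i] c P -> False.
  move=> c P [g1 g2 g3]; move/negP: hF; apply.
  pose c' (i : 'I_k) := if i < b then cen i else c i.
  have c'E : forall i : 'I_k, b <= i -> c' i = c i by move=> i hi; rewrite /c' ltnNge hi.
  apply: (@extend_gen n r k d H hU _ [set i : 'I_k | b <= i] c' P erefl).
  - by move=> i; rewrite inE => hi; rewrite c'E //; apply: g1; rewrite inE.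
  - move=> i i'; rewrite !inE => hi hi'; rewrite !c'E //; apply: g3; by rewrite inE.
  - by move=> i; rewrite inE -ltnNge => hi; rewrite /c' hi; have := cenB i hi; rewrite inE.
  - move=> i i'; rewrite !inE -!ltnNge => hi hi'; rewrite /c' hi hi'; exact: cen_inj.
  - move=> i i' hi hi'; rewrite inE -ltnNge in hi; rewrite inE in hi'; rewrite /c' hi (ltnNge i' b) hi' /=.
    have := g2 i'; rewrite inE => /(_ hi') dj; apply/negP => cs.
    by move/disjP: dj => /(_ _ cs (cenB i hi)).
pose H' := [set e in H | [disjoint e & B]].
have H'H : H' \subset H by apply/subsetP => e; rewrite inE => /andP [].
have H'U : uniform r H'.
  by apply/forallP => e; apply/implyP => eG; move: ((forallP hU) e); rewrite (subsetP H'H _ eG).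
have cH : #|H| <= ('C(n, r) - 'C(n - b, r)) + #|H'|.
  rewrite -(cardsID H' H) (setIidPr H'H) addnC leq_add2r /b -card_meet subset_leq_card //.
  apply/subsetP => e; rewrite !inE negb_and => /andP [/orP [nH|ndj] eH]; first by rewrite eH in nH.
  by move: ((forallP hU) e); rewrite eH ndj => /= ->.
have cB : #|~: B| = n - b by have := cardsC B; rewrite card_ord /b; lia.
case: (boolP (contains (star_exp r (d bi)) H')) => [cH'|ncH']; last first.
  apply: leq_trans cH _; apply: leq_trans _ (leq_bigmax bi); rewrite leq_add2l /=.
  apply: (ex_upper (A := ~: B) r0 H'U ncH'); last by rewrite cB.
  by move=> e; rewrite inE disjoints_subset => /andP [].
have [c0 [P0 sP0]] := extract (hd bi) cH'.
pose V0 := sverts c0 P0 (d bi).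
have V0B : [disjoint V0 & B].
  apply/disjP => x xV xB; have [e eH' xe] := sverts_inedge sP0 (hd bi) xV.
  by move: eH'; rewrite inE => /andP [_ /disjP /(_ x xe xB)].
have sP0H : starP r H c0 P0 (d bi) by apply: starP_mono H'H sP0.
case: (ltnP b.+1 k) => hb1; last first.
  exfalso; apply: (Hfull (fun _ => c0) (fun _ => P0)).
  have ei : forall i : 'I_k, i \in [set i : 'I_k | b <= i] -> i = bi.
    move=> i; rewrite inE => hi; apply: ord_inj => /=; apply/eqP; rewrite eqn_leq; apply/andP; split; last exact: hi.
    by rewrite -ltnS; exact: leq_trans (ltn_ord i) hb1.
  split.
  - by move=> i /ei ->.
  - by move=> i /ei ->.
  - by move=> i i' /ei -> /ei ->; rewrite eqxx.
pose b1 : 'I_k := Ordinal hb1.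
pose X := B :|: V0.
pose G := [set e in H | [disjoint e & X]].
have cX : #|~: X| <= n - b.+1.
  have : #|c0 |: B| <= #|X|.
    apply: subset_leq_card; rewrite subUset sub1set; apply/andP; split; first by rewrite in_setU sverts_c orbT.
    exact: subsetUl.
  rewrite cardsU1.
  have -> : c0 \notin B by apply/negP => cb; move/disjP: V0B => /(_ c0 (sverts_c _ _ _) cb).
  have := cardsC X; rewrite card_ord /b; lia.
have cG : #|G| <= ex r (n - b.+1) (star_exp r (d b1)) + #|[set i : 'I_k | b <= i] :\: [set bi]| * (s * D).
  apply: (@greedy2 n r k d H hU r0 B D hB b (d b1) (n - b.+1) (hd b1) Hfull _ _ [set bi] (fun _ => c0) (fun _ => P0) X).
  - move=> i hi; apply: hmono => /=; exact: hi.
  - by rewrite sub1set inE /= leqnn.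
  - by [].
  - move=> i hi; rewrite inE => nib; rewrite ltn_neqAle hi andbT.
    by apply: contra nib => /eqP e; apply/eqP; apply: val_inj.
  - split.
    + by move=> i; rewrite inE => /eqP ->.
    + by move=> i; rewrite inE => /eqP ->.
    + by move=> i i'; rewrite !inE => /eqP -> /eqP ->; rewrite eqxx.
  - exact: subsetUl.
  - by move=> i; rewrite inE => /eqP ->; apply: subsetUr.
  - exact: cX.
have cJ : #|[set i : 'I_k | b <= i] :\: [set bi]| <= k by rewrite -[k in _ <= k]card_ord max_card.
have cH'G : #|H'| <= #|G| + s * D.
  apply: leq_trans (count_rm hB H'H V0B) _; apply: leq_add.
    apply: subset_leq_card; apply/subsetP => e; rewrite !inE => /andP [/andP [eH dB] dV].
    rewrite eH /=; apply/disjP => x xe; rewrite inE => /orP [xB|xV].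
      by move/disjP: dB => /(_ x xe xB).
    by move/disjP: dV => /(_ x xe xV).
  by rewrite /D leq_mul2r (leq_trans (sverts_card sP0H)) ?term_le_s ?orbT.
apply: leq_trans cH _; apply: leq_trans _ (leq_bigmax b1); rewrite /=.
have pascal : 'C(n - b, r) = 'C(n - b.+1, r) + 'C(n - b.+1, r.-1).
  have -> : n - b = (n - b.+1).+1 by lia.
  by case: (r) r0 => // rr _; rewrite binS.
have m1 : 'C(n - b, r) <= 'C(n, r) by apply: leq_bin2l; apply: leq_subr.
have m2 : 'C(n - k, r.-1) <= 'C(n - b.+1, r.-1) by apply: leq_bin2l; lia.
have m3 : #|[set i : 'I_k | b <= i] :\: [set bi]| * (s * D) <= k * (s * D) by rewrite leq_mul2r cJ orbT.
move: harith; rewrite mulSn => harith'.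
apply: (fin_arith pascal m1).
apply: leq_trans cH'G _; apply: leq_trans (leq_add cG (leqnn _)) _.
rewrite -addnA leq_add2l; apply: leq_trans _ m2; apply: leq_trans _ harith'.
by rewrite addnC leq_add2l.
Qed.
End Upper.

Lemma bin_succ_le m j : 2 * j <= m -> 'C(m.+1, j) <= 2 * 'C(m, j).
Proof.
move=> h; have pos : 0 < m.+1 - j by lia.
rewrite -(leq_pmul2l pos); have := mul_bin_down m.+1 j; rewrite /= => e.
rewrite -e mulnA; apply: leq_mul => //; lia.
Qed.

Lemma bin_shift_le k m j : 2 * j <= m -> 'C(m + k, j) <= 2 ^ k * 'C(m, j).
Proof.
elim: k => [|k IH] h; first by rewrite addn0 expn0 mul1n.
rewrite addnS expnS -mulnA; apply: leq_trans (bin_succ_le _) _; first lia.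
by rewrite leq_mul2l IH // orbT.
Qed.

Lemma arith A k j : exists N, forall n, N <= n -> A * 'C(n, j) <= 'C(n - k, j.+1).
Proof.
exists (k + 2 * j + j + A * 2 ^ k * j.+1 + 1) => n hn.
have en : n = (n - k) + k by lia.
have hm : 2 * j <= n - k by lia.
rewrite -(leq_pmul2l (ltn0Sn j)) mul_bin_left.
apply: (@leq_trans (j.+1 * (A * (2 ^ k * 'C(n - k, j))))).
  by rewrite !leq_mul2l {1}en bin_shift_le ?orbT.
rewrite !mulnA leq_mul2r; apply/orP; right.
rewrite [j.+1 * A]mulnC -mulnA (mulnC j.+1) mulnA.
move: hn; generalize (A * 2 ^ k * j.+1) => q; lia.
Qed.

Unset Implicit Arguments.

Theorem theorem1p5 (k r : nat) (d : 'I_k -> nat) :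
  1 <= k -> 2 <= r ->
  (forall i, 0 < d i) ->
  (forall i j : 'I_k, i <= j -> d j <= d i) ->
  exists N, forall n, N <= n ->
    ex r n (ustar_exp r d) =
    \max_(i < k) ('C(n, r) - 'C(n - i, r) + ex r (n - i) (star_exp r (d i))).
Proof.
move=> k1 r2 hd hmono.
pose s := sumS r d.
have [N0 hN0] := arith (k.+1 * (s * s)) k r.-2.
exists (N0 + k.+1) => n hn.
have hkn : k < n by lia.
have r0 : 0 < r by lia.
apply/eqP; rewrite eqn_leq; apply/andP; split.
  rewrite /ex; apply/bigmax_leqP => H /andP [hU hF]; apply: upper => //.
  have -> : r.-1 = (r.-2).+1 by lia.
  by rewrite !mulnA -(mulnA _ s s); apply: hN0; lia.
apply/bigmax_leqP => i _; apply: lower => //.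
by apply: leq_trans (ltn_ord i) (ltnW hkn).
Qed.
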